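(* Let $\Lambda\to\Lambda_1\to\Lambda_2$ be local homomorphisms of local rings such that $\Lambda_1\to\Lambda_2$ induces a finite extension of residue fields. If $\Lambda\to\Lambda_2$ is slightly ramified, then so is $\Lambda\to\Lambda_1$.
   Context: For a local ring $(R,\mathfrak m_R)$, $\hat\Gamma(R,\mathfrak m_R)$ is the inverse limit of the system of finite-length local $R$-algebras with a divided power structure on their maximal ideal (transition maps divided power homomorphisms). A local homomorphism $\Lambda\to\Lambda'$ is slightly ramified if the composite $\Lambda\to\hat\Gamma(\Lambda',\mathfrak m_{\Lambda'})$ is injective. *)

(* Defs.v *)
From HB Require Import structures.
From mathcomp Require Import all_boot all_order all_algebra.
Set Implicit Arguments. Unset Strict Implicit. Unset Printing Implicit Defensive.
Import GRing.Theory.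
Local Open Scope ring_scope.

Definition ideal (A : comUnitRingType) (I : A -> Prop) : Prop :=
  I 0 /\ (forall x y, I x -> I y -> I (x + y)) /\ (forall a x, I x -> I (a * x)).

Definition maximal_ideal (A : comUnitRingType) (I : A -> Prop) : Prop :=
  ideal I /\ ~ I 1 /\
  forall J : A -> Prop, ideal J -> (forall x, I x -> J x) -> ~ J 1 ->
    forall x, J x -> I x.

Definition local_ring (A : comUnitRingType) : Prop :=
  exists I : A -> Prop, maximal_ideal I /\
    forall J, maximal_ideal J -> forall x, J x <-> I x.

Definition max_ideal (A : comUnitRingType) (x : A) : Prop :=
  exists I : A -> Prop, maximal_ideal I /\ I x.

Definition local_hom (A B : comUnitRingType) (f : A -> B) : Prop :=
  forall x, max_ideal x -> max_ideal (f x).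

(** Finite length of an R-algebra A (structure map f) as an R-module:
    lengths of strictly increasing chains of R-submodules are bounded. *)
Definition submodule (R A : comUnitRingType) (f : {rmorphism R -> A})
  (M : A -> Prop) : Prop :=
  M 0 /\ (forall x y, M x -> M y -> M (x + y)) /\
  (forall r x, M x -> M (f r * x)).

Definition finite_length_over (R A : comUnitRingType) (f : {rmorphism R -> A}) : Prop :=
  exists N : nat, forall (k : nat) (M : nat -> A -> Prop),
    (forall i, (i <= k)%N -> submodule f (M i)) ->
    (forall i, (i < k)%N ->
       (forall x, M i x -> M i.+1 x) /\ exists x, M i.+1 x /\ ~ M i x) ->
    (k <= N)%N.

Definition pd_structure (A : comUnitRingType) (I : A -> Prop)
  (g : nat -> A -> A) : Prop :=
  ideal I /\
  (forall x, I x -> g 0%N x = 1) /\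
  (forall x, I x -> g 1%N x = x) /\
  (forall n x, I x -> (0 < n)%N -> I (g n x)) /\
  (forall n a x, I x -> g n (a * x) = a ^+ n * g n x) /\
  (forall n x y, I x -> I y ->
     g n (x + y) = \sum_(i < n.+1) g i x * g (n - i)%N y) /\
  (forall m n x, I x -> g m x * g n x = 'C(m + n, m)%:R * g (m + n)%N x) /\
  (forall m n x, I x -> (0 < m)%N ->
     g n (g m x) = ((m * n)`! %/ (n`! * (m`!) ^ n))%:R * g (m * n)%N x).

(** Objects of the system defining \hat\Gamma(R, m_R): finite-length local
    R-algebras with a divided power structure on their maximal ideal. *)
Record pdobj (R : comUnitRingType) := PDObj {
  pd_car : comUnitRingType;
  pd_alg : {rmorphism R -> pd_car};
  pd_gam : nat -> pd_car -> pd_car;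
  pd_local : local_ring pd_car;
  pd_alg_local : local_hom pd_alg;
  pd_length : finite_length_over pd_alg;
  pd_struct : pd_structure (@max_ideal pd_car) pd_gam }.

Record pdmor (R : comUnitRingType) (X Y : pdobj R) := PDMor {
  pm_fun : {rmorphism pd_car X -> pd_car Y};
  pm_alg : forall r, pm_fun (@pd_alg R X r) = @pd_alg R Y r;
  pm_ideal : forall x, max_ideal x -> max_ideal (pm_fun x);
  pm_gam : forall n x, max_ideal x ->
     pm_fun (@pd_gam R X n x) = @pd_gam R Y n (pm_fun x) }.

(** The inverse limit \hat\Gamma(R, m_R) (as compatible families) and the
    canonical map R -> \hat\Gamma(R, m_R). *)
Definition gamma_hat (R : comUnitRingType) :=
  { a : forall X : pdobj R, pd_car X |
    forall (X Y : pdobj R) (h : pdmor X Y), @pm_fun R X Y h (a X) = a Y }.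

Definition to_gamma_hat (R : comUnitRingType) (r : R) : gamma_hat R :=
  @exist _ (fun a : forall X : pdobj R, pd_car X => forall (X Y : pdobj R) (h : pdmor X Y), @pm_fun R X Y h (a X) = a Y) (fun X => @pd_alg R X r) (fun X Y h => @pm_alg R X Y h r).

Definition slightly_ramified (L L' : comUnitRingType) (f : L -> L') : Prop :=
  injective (fun x => to_gamma_hat (f x)).

(** Residue field extension of f : L1 -> L2 is finite: finitely many
    elements of L2 span L2/m2 over L1/m1. *)
Definition finite_residue_ext (L1 L2 : comUnitRingType) (f : L1 -> L2) : Prop :=
  exists s : seq L2, forall y : L2, exists c : seq L1,
    max_ideal (y - \sum_(i < size s) f c`_i * s`_i).

(* Main.v *)
Require Import Defs.
From mathcomp Require Import all_boot all_order all_algebra ring zify.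
From Stdlib Require Import ClassicalEpsilon ProofIrrelevance FunctionalExtensionality Classical.
Set Implicit Arguments. Unset Strict Implicit. Unset Printing Implicit Defensive.
Import GRing.Theory.
Local Open Scope ring_scope.

Lemma local_max (A : comUnitRingType) : local_ring A ->
  exists I : A -> Prop, maximal_ideal I /\ forall x, max_ideal x <-> I x.
Proof.
move=> [I [HI Hu]]; exists I; split=> // x; split.
  by move=> [J [HJ Jx]]; apply/(Hu J HJ).
by move=> Ix; exists I.
Qed.

Lemma max_ideal_mul (A : comUnitRingType) (a x : A) : max_ideal x -> max_ideal (a * x).
Proof. move=> [I [HMI Ix]]; exists I; split => //; case: HMI => [[_ [_ HI]] _]; exact: HI. Qed.

Lemma max_ideal_mulr (A : comUnitRingType) (a x : A) : max_ideal x -> max_ideal (x * a).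
Proof. by rewrite mulrC; apply: max_ideal_mul. Qed.

Lemma max_ideal_add (A : comUnitRingType) : local_ring A -> forall x y : A,
  max_ideal x -> max_ideal y -> max_ideal (x + y).
Proof.
move=> /local_max [I [HI HM]] x y /HM Ix /HM Iy; apply/HM.
by case: HI => [[_ [HD _]] _]; apply: HD.
Qed.

Lemma max_ideal_not1 (A : comUnitRingType) : ~ @max_ideal A 1.
Proof. by move=> [I [[_ [HI _]] I1]]. Qed.

Lemma unit_trick (A : comUnitRingType) : local_ring A -> forall q : A,
  ~ max_ideal q -> exists m e, max_ideal m /\ 1 = m + e * q.
Proof.
move=> /local_max [I [HI HM]] q Hq.
pose J := fun x : A => exists m e, I m /\ x = m + e * q.
have HJ : ideal J.
  case: HI => [[I0 [ID IM]] _]; split; first by exists 0, 0; rewrite mul0r addr0.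
  split.
    move=> x y [m [e [Im ->]]] [m' [e' [Im' ->]]]; exists (m + m'), (e + e').
    by split; [apply: ID | rewrite mulrDl !addrA (addrAC m)].
  move=> a x [m [e [Im ->]]]; exists (a * m), (a * e).
  by split; [apply: IM | rewrite mulrDr mulrA].
have IJ : forall x, I x -> J x by move=> x Ix; exists x, 0; rewrite mul0r addr0.
case: (classic (J 1)) => [[m [e [Im E]]]|NJ1].
  by exists m, e; split; [apply/HM|].
exfalso; apply: Hq; apply/HM.
case: (HI) => [[I0 _] [_ Hmax]]; apply: (Hmax J HJ IJ NJ1).
by exists 0, 1; rewrite mul1r add0r.
Qed.

Section Core.
Variables (L1 Y : comUnitRingType) (c : {rmorphism L1 -> Y}) (u : nat -> Y).

Definition spn (t : nat) (y : Y) := exists r : nat -> L1, y = \sum_(i < t) c (r i) * u i.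

Lemma spn0 t : spn t 0.
Proof. by exists (fun=> 0); rewrite big1 // => i _; rewrite rmorph0 mul0r. Qed.

Lemma spnD t x y : spn t x -> spn t y -> spn t (x + y).
Proof.
move=> [r ->] [r' ->]; exists (fun i => r i + r' i).
by rewrite -big_split /=; apply: eq_bigr => i _; rewrite rmorphD mulrDl.
Qed.

Lemma spnZ t q y : spn t y -> spn t (c q * y).
Proof.
move=> [r ->]; exists (fun i => q * r i).
by rewrite mulr_sumr; apply: eq_bigr => i _; rewrite rmorphM mulrA.
Qed.

Lemma spnN t y : spn t y -> spn t (- y).
Proof. by move=> H; rewrite -mulN1r -(rmorphN1 c); apply: spnZ. Qed.

Lemma spnS t y : spn t.+1 y <-> exists s r, spn t s /\ y = s + c r * u t.
Proof.
split.
  move=> [r ->]; exists (\sum_(i < t) c (r i) * u i), (r t); split; first by exists r.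
  by rewrite big_ord_recr.
move=> [s [q [[r ->] ->]]]; exists (fun i => if (i < t)%N then r i else q).
rewrite big_ord_recr /= ltnn; congr (_ + _); apply: eq_bigr => i _.
by rewrite ltn_ord.
Qed.

Lemma spn_le t t' y : (t <= t')%N -> spn t y -> spn t' y.
Proof.
move=> /subnKC <-; elim: (t' - t)%N => [|n IH]; first by rewrite addn0.
move=> H; rewrite addnS; apply/spnS; exists y, 0; split; first exact: IH.
by rewrite rmorph0 mul0r addr0.
Qed.

End Core.

Section Core2.
Variables (L1 Y : comUnitRingType) (c : {rmorphism L1 -> Y}) (u : nat -> Y) (K : nat).
Hypothesis HL1 : local_ring L1.
Hypothesis H1 : forall y, spn c u K y.
Hypothesis H2 : forall t m, (t < K)%N -> max_ideal m -> spn c u t (c m * u t).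

Definition psi t (M : Y -> Prop) := exists y, M y /\ spn c u t.+1 y /\ ~ spn c u t y.
Definition bb t M : nat := if excluded_middle_informative (psi t M) then 1%N else 0%N.
Definition phi M : nat := (\sum_(t < K) bb t M)%N.

Lemma psi_mono t (M M' : Y -> Prop) : (forall x, M x -> M' x) -> psi t M -> psi t M'.
Proof. by move=> S [y [My Hy]]; exists y; split => //; apply: S. Qed.

Lemma bb_mono t (M M' : Y -> Prop) : (forall x, M x -> M' x) -> (bb t M <= bb t M')%N.
Proof.
move=> S; rewrite /bb; case: excluded_middle_informative => //= h.
by case: excluded_middle_informative => // h'; case: h'; apply: psi_mono h.
Qed.

Lemma bb_le1 t M : (bb t M <= 1)%N.
Proof. by rewrite /bb; case: excluded_middle_informative. Qed.

Lemma key (M M' : Y -> Prop) : submodule c M -> submodule c M' ->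
  (forall x, M x -> M' x) -> (exists x, M' x /\ ~ M x) ->
  exists t : 'I_K, psi t M' /\ ~ psi t M.
Proof.
move=> [M0 [MD MZ]] [M'0 [M'D M'Z]] S [x [M'x NMx]].
apply: NNPP => Hn.
have H : forall t : nat, (t < K)%N -> psi t M' -> psi t M.
  move=> t tK P'; apply: NNPP => NP; apply: Hn; exists (Ordinal tK); by split.
suff: forall t, (t <= K)%N -> forall y, M' y -> spn c u t y -> M y.
  by move=> /(_ K (leqnn K) x M'x (H1 x)).
elim=> [|t IH] tK y M'y.
  by move=> [r ->]; rewrite big_ord0.
move=> Sy; have tK' : (t < K)%N by [].
case: (classic (spn c u t y)) => Sty; first by apply: IH => //; apply: ltnW.
have [z [Mz [Sz NSz]]] : psi t M by apply: H => //; exists y.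
move/spnS: Sy => [sy [r [Ssy Ey]]].
move/spnS: Sz => [sz [q [Ssz Ez]]].
have Nq : ~ max_ideal q.
  move=> mq; apply: NSz; rewrite Ez; apply: spnD => //; exact: H2.
have [m [e [mm E1]]] := unit_trick HL1 Nq.
have h1 : c 1 = c m + c e * c q by rewrite E1 rmorphD rmorphM.
have Hc : c m = 1 - c e * c q by rewrite -(rmorph1 c) h1 addrK.
have Ed : y - c (r * e) * z = sy - c (r * e) * sz + c r * c m * u t.
  by rewrite Ey Ez Hc !rmorphM; ring.
have Md : M (y - c (r * e) * z).
  apply: IH; first exact: ltnW.
    apply: M'D => //; rewrite -mulN1r -(rmorphN1 c) mulrA -rmorphM.
    by apply: M'Z; apply: S.
  rewrite Ed; apply: spnD; first by apply: spnD => //; apply: spnN; apply: spnZ.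
  by rewrite -rmorphM; apply: H2 => //; apply: max_ideal_mul.
have -> : y = (y - c (r * e) * z) + c (r * e) * z by rewrite subrK.
by apply: MD => //; apply: MZ.
Qed.

Lemma phi_lt (M M' : Y -> Prop) : submodule c M -> submodule c M' ->
  (forall x, M x -> M' x) -> (exists x, M' x /\ ~ M x) -> (phi M < phi M')%N.
Proof.
move=> sM sM' S ex; have [t [P' NP]] := key sM sM' S ex.
rewrite /phi (bigD1 t) //= [X in (_ < X)%N](bigD1 t) //=.
have -> : bb t M = 0%N by rewrite /bb; case: excluded_middle_informative.
have -> : bb t M' = 1%N by rewrite /bb; case: excluded_middle_informative.
by rewrite add0n add1n ltnS; apply: leq_sum => i _; apply: bb_mono.
Qed.

Lemma phi_le M : (phi M <= K)%N.
Proof.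
rewrite /phi -[X in (_ <= X)%N]card_ord -sum1_card.
by apply: leq_sum => i _; apply: bb_le1.
Qed.

Lemma core : finite_length_over c.
Proof.
exists K => k M Hsub Hch.
suff: forall i, (i <= k)%N -> (i <= phi (M i))%N.
  by move=> /(_ k (leqnn k)) h; apply: leq_trans h (phi_le _).
elim=> [|i IH] ik //.
have ik' : (i < k)%N by [].
have [S ex] := Hch i ik'.
apply: leq_ltn_trans (IH (ltnW ik')) _.
by apply: phi_lt => //; apply: Hsub => //; apply: ltnW.
Qed.
End Core2.

Lemma exists_max (P : nat -> Prop) (N : nat) : P 0%N -> (forall k, P k -> (k <= N)%N) ->
  exists k, P k /\ forall k', P k' -> (k' <= k)%N.
Proof.
move=> P0 HB.
suff: forall n m, P m -> (N - m <= n)%N -> exists k, P k /\ forall k', P k' -> (k' <= k)%N.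
  by move=> /(_ N 0%N P0); apply; rewrite subn0.
elim=> [|n IH] m Pm Hm.
  exists m; split => // k' Pk'; apply: leq_trans (HB _ Pk') _.
  by move: Hm; rewrite leqn0 subn_eq0.
case: (classic (exists k', P k' /\ (m < k')%N)) => [[k' [Pk' mk']]|Hn].
  apply: (IH k' Pk'); have := HB _ Pk'; move: Hm mk'; lia.
exists m; split => // k' Pk'; rewrite leqNgt; apply/negP => mk'; apply: Hn; by exists k'.
Qed.

Section YSide.
Variables (L2 Y : comUnitRingType) (a : {rmorphism L2 -> Y}).
Hypothesis HL2 : local_ring L2.
Hypothesis HY : local_ring Y.
Hypothesis Ha : local_hom a.
Hypothesis FL : finite_length_over a.

Lemma ideal_sub (I : Y -> Prop) : ideal I -> submodule a I.
Proof. by move=> [I0 [ID IM]]; split => //; split => // r x; apply: IM. Qed.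

Lemma nonunit_max (z : Y) : z \isn't a GRing.unit -> max_ideal z.
Proof.
move=> Nz; have [N HN] := FL.
pose P k := exists I : nat -> Y -> Prop, (forall i, (i <= k)%N -> ideal (I i) /\ ~ I i 1) /\
  I 0%N z /\ (forall i, (i < k)%N -> (forall x, I i x -> I i.+1 x) /\ exists x, I i.+1 x /\ ~ I i x).
have P0 : P 0%N.
  exists (fun _ x => exists e, x = e * z); split; last first.
    by split => //; exists 1; rewrite mul1r.
  move=> i _; split.
    split; first by exists 0; rewrite mul0r.
    split; first by move=> x y [e ->] [e' ->]; exists (e + e'); rewrite mulrDl.
    by move=> b x [e ->]; exists (b * e); rewrite mulrA.
  move=> [e E]; move/negP: Nz; apply; apply/unitrP; exists e; split => //.
  by rewrite mulrC.
have HB : forall k, P k -> (k <= N)%N.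
  move=> k [I [HI [_ Hc]]]; apply: (HN k I) => //.
  by move=> i ik; apply: ideal_sub; case: (HI i ik).
have [k [[I [HI [Iz Hc]]] Hmax]] := exists_max P0 HB.
have I0k : forall i, (i <= k)%N -> I i z.
  elim=> [|i IH] // ik; by apply: (Hc i ik).1; apply: IH; apply: ltnW.
exists (I k); split; last exact: I0k.
have [HIk NIk] := HI k (leqnn k).
split => //; split => // J HJ IJ NJ x Jx.
apply: NNPP => NIx.
have : P k.+1.
  exists (fun i => if (i <= k)%N then I i else J); split; last split.
  - move=> i _; case: leqP => ik; [exact: HI | by split].
  - by rewrite leq0n.
  - move=> i ik; have ik2 : (i <= k)%N by []; rewrite ik2; case: leqP => [ik'|ik'].
      have -> : i = k by move: ik ik'; lia.
      by split => //; exists x.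
    by apply: Hc.
by move/Hmax; rewrite ltnn.
Qed.

Lemma unit_1m (y : Y) : max_ideal y -> (1 - y) \is a GRing.unit.
Proof.
move=> my; apply: NNPP => /negP /nonunit_max h.
by apply: (@max_ideal_not1 Y); rewrite -(subrK y 1) addrC; apply: max_ideal_add.
Qed.

Lemma nilpot (y : Y) : max_ideal y -> exists p, y ^+ p = 0.
Proof.
move=> my; have [N HN] := FL.
have [p [e Hp]] : exists p e, y ^+ p = y ^+ p.+1 * e.
  apply: NNPP => Hn.
  have : (N.+1 <= N)%N; last by rewrite ltnn.
  apply: (HN N.+1 (fun i x => exists e, x = y ^+ (N.+1 - i) * e)).
    move=> i _; split; first by exists 0; rewrite mulr0.
    split; first by move=> x x' [e ->] [e' ->]; exists (e + e'); rewrite mulrDr.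
    by move=> r x [e ->]; exists (a r * e); rewrite mulrCA.
  move=> i iN; split.
    move=> x [e ->]; exists (y * e).
    by rewrite subSS subSn // exprSr -mulrA.
  exists (y ^+ (N.+1 - i.+1)); split; first by exists 1; rewrite mulr1.
  move=> [e E]; apply: Hn; exists (N.+1 - i.+1)%N, e.
  by rewrite -subSn // subSS in E *.
exists p.
have h : y ^+ p * (1 - y * e) = 0 by rewrite mulrBr mulr1 mulrA -exprSr -Hp subrr.
have U : (1 - y * e) \is a GRing.unit by apply: unit_1m; apply: max_ideal_mulr.
by rewrite -(mulrK U (y ^+ p)) h mul0r.
Qed.
End YSide.

Section Comp.
Variables (L2 Y : comUnitRingType) (a : {rmorphism L2 -> Y}).
Hypothesis HL2 : local_ring L2.
Hypothesis HY : local_ring Y.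
Hypothesis Ha : local_hom a.
Hypothesis FL : finite_length_over a.

Definition chainP k (M : nat -> Y -> Prop) :=
  (forall i, (i <= k)%N -> submodule a (M i)) /\ (forall x, M 0%N x -> x = 0) /\
  (forall i, (i < k)%N -> (forall x, M i x -> M i.+1 x) /\ exists x, M i.+1 x /\ ~ M i x).

Lemma max_ideal0 (A : comUnitRingType) : local_ring A -> @max_ideal A 0.
Proof. by move=> [I [HI _]]; exists I; split => //; case: HI => [[]]. Qed.

Lemma comp_series : exists k (M : nat -> Y -> Prop) (w : nat -> Y),
  (forall x, M 0%N x -> x = 0) /\ (forall y, M k y) /\
  (forall j, (j < k)%N ->
     (forall y, M j.+1 y -> exists x r, M j x /\ y = x + a r * w j) /\
     (forall m, max_ideal m -> M j (a m * w j))).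
Proof.
have [N HN] := FL.
have P0 : exists M, chainP 0 M.
  exists (fun _ x => x = 0); split => //; move=> i _; split => //.
  split; first by move=> x y -> ->; rewrite addr0.
  by move=> r x ->; rewrite mulr0.
have HB : forall k, (exists M, chainP k M) -> (k <= N)%N.
  by move=> k [M [HS [_ Hc]]]; apply: (HN k M).
have [k [[M [HS [M0 Hc]]] Hmax]] := exists_max P0 HB.
have Hfull : forall y, M k y.
  move=> y; apply: NNPP => Ny.
  have : exists M, chainP k.+1 M.
    exists (fun i => if (i <= k)%N then M i else fun _ => True); split; last split.
    - move=> i _; case: leqP => ik; first exact: HS.
      by split => //; split.
    - by rewrite leq0n.
    - move=> i ik; have ik2 : (i <= k)%N by []; rewrite ik2; case: leqP => ik'.
        have -> : i = k by move: ik ik'; lia.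
        by split => //; exists y.
      by apply: Hc.
  by move/Hmax; rewrite ltnn.
have Hbet : forall j (Nm : Y -> Prop), (j < k)%N -> submodule a Nm ->
    (forall x, M j x -> Nm x) -> (forall x, Nm x -> M j.+1 x) ->
    (forall x, M j.+1 x -> Nm x) \/ (forall x, Nm x -> M j x).
  move=> j Nm jk SN MN NM; apply: NNPP => Hn.
  have [x1 [Nx1 Mx1]] : exists x, Nm x /\ ~ M j x.
    apply: NNPP => H; apply: Hn; right => x Nx; apply: NNPP => Mx; apply: H; by exists x.
  have [x2 [Mx2 Nx2]] : exists x, M j.+1 x /\ ~ Nm x.
    apply: NNPP => H; apply: Hn; left => x Mx; apply: NNPP => Nx; apply: H; by exists x.
  have : exists M', chainP k.+1 M'.
    exists (fun i => if (i <= j)%N then M i else if i == j.+1 then Nm else M i.-1).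
    split; last split.
    - move=> i ik; case: leqP => ij; first by apply: HS; apply: leq_trans ij (ltnW jk).
      case: eqP => _ //; apply: HS; move: ik ij; lia.
    - by rewrite leq0n.
    - move=> i ik.
      case: (ltngtP i j) => [ij|ij|->].
      + apply: Hc; apply: ltn_trans ij jk.
      + case: (eqVneq i j.+1) => [->|ne].
          rewrite (_ : (j.+2 == j.+1) = false) /=; last by apply/eqP; lia.
          by split => //; exists x2.
        have -> : (i.+1 == j.+1) = false by apply/eqP; move: ij ne => ? /eqP; lia.
        case: i ik ij ne => [|i'] ik ij ne //=; apply: Hc; move: ik; lia.
      + rewrite eqxx; split => //; by exists x1.
  by move/Hmax; rewrite ltnn.
have Hw : forall j, exists w, (j < k)%N ->
     (forall y, M j.+1 y -> exists x r, M j x /\ y = x + a r * w) /\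
     (forall m, max_ideal m -> M j (a m * w)).
  move=> j; case: (ltnP j k) => jk; last by exists 0.
  have [HS1 [HS2 HS3]] := HS j (ltnW jk).
  have [HS1' [HS2' HS3']] := HS j.+1 jk.
  have [Mi [w [Mw Nw]]] := Hc j jk.
  exists w => _.
  pose N1 := fun y => exists x r, M j x /\ y = x + a r * w.
  have SN1 : submodule a N1.
    split; first by exists 0, 0; rewrite rmorph0 mul0r addr0.
    split.
      move=> y y' [x [r [Mx ->]]] [x' [r' [Mx' ->]]]; exists (x + x'), (r + r').
      by split; [apply: HS2 | rewrite rmorphD mulrDl addrACA].
    move=> r' y [x [r [Mx ->]]]; exists (a r' * x), (r' * r).
    by split; [apply: HS3 | rewrite rmorphM mulrDr mulrA].
  have i1 : forall x, M j x -> N1 x by move=> x Mx; exists x, 0; rewrite rmorph0 mul0r addr0.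
  have i2 : forall x, N1 x -> M j.+1 x.
    by move=> y [x [r [Mx ->]]]; apply: HS2'; [exact: Mi | exact: HS3'].
  have [h1|h1] := Hbet j N1 jk SN1 i1 i2.
    2: by exfalso; apply: Nw; apply: h1; exists 0, 1; rewrite rmorph1 mul1r add0r.
  split => //.
  pose N2 := fun y => exists x m, M j x /\ max_ideal m /\ y = x + a m * w.
  have SN2 : submodule a N2.
    split; first by exists 0, 0; rewrite rmorph0 mul0r addr0; split => //; split => //; exact: max_ideal0.
    split.
      move=> y y' [x [r [Mx [mr ->]]]] [x' [r' [Mx' [mr' ->]]]]; exists (x + x'), (r + r').
      split; first exact: HS2.
      by split; [apply: max_ideal_add | rewrite rmorphD mulrDl addrACA].
    move=> r' y [x [r [Mx [mr ->]]]]; exists (a r' * x), (r' * r).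
    split; first exact: HS3.
    by split; [apply: max_ideal_mul | rewrite rmorphM mulrDr mulrA].
  have j1 : forall x, M j x -> N2 x.
    by move=> x Mx; exists x, 0; rewrite rmorph0 mul0r addr0; split => //; split => //; exact: max_ideal0.
  have j2 : forall x, N2 x -> M j.+1 x.
    by move=> y [x [r [Mx [_ ->]]]]; apply: HS2'; [exact: Mi | exact: HS3'].
  have [h2|h2] := Hbet j N2 jk SN2 j1 j2.
    exfalso; have [x [m [Mx [mm Ew]]]] := h2 w Mw.
    have : forall p, exists x', M j x' /\ w = x' + a m ^+ p * w.
      elim=> [|p [x' [Mx' E']]]; first by exists 0; rewrite expr0 mul1r add0r.
      exists (x' + a (m ^+ p) * x); split; first by apply: HS2 => //; apply: HS3.
      by rewrite {1}E' {1}Ew mulrDr addrA rmorphXn exprSr mulrA.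
    have [p hp] := nilpot HY FL (Ha mm).
    move=> /(_ p) [x' [Mx' E']]; apply: Nw; by rewrite E' hp mul0r addr0.
  by move=> m mm; apply: h2; exists 0, m; rewrite add0r; split => //; apply: HS2'.
exists k, M, (fun j => proj1_sig (constructive_indefinite_description _ (Hw j))).
split => //; split => // j jk.
exact: (proj2_sig (constructive_indefinite_description _ (Hw j)) jk).
Qed.
End Comp.

Lemma spn_block (L1 Y : comUnitRingType) (c : {rmorphism L1 -> Y}) (u : nat -> Y) t D s0 (q : nat -> L1) :
  spn c u t s0 -> spn c u (t + D) (s0 + \sum_(i < D) c (q i) * u (t + i)%N).
Proof.
move=> [r ->]; exists (fun i => if (i < t)%N then r i else q (i - t)%N).
rewrite big_split_ord /=; congr (_ + _); apply: eq_bigr => i _ /=.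
  by rewrite ltn_ord.
by rewrite ltnNge leq_addr /= addKn.
Qed.

Lemma transfer_length (L1 L2 Y : comUnitRingType) (g : {rmorphism L1 -> L2})
  (a : {rmorphism L2 -> Y}) :
  local_ring L1 -> local_ring L2 -> local_ring Y -> local_hom g -> local_hom a ->
  finite_residue_ext g -> finite_length_over a -> finite_length_over (a \o g).
Proof.
move=> HL1 HL2 HY Hg Ha [s Hs] FL.
set D := size s.
have D0 : (0 < D)%N.
  rewrite lt0n; apply/negP => /eqP D0.
  have [cs Hc] := Hs 1; apply: (@max_ideal_not1 L2).
  by move: Hc; rewrite -/D; move: (D) D0 => d ->; rewrite big_ord0 subr0.
have [k [M [w [M0 [Mfull Hj]]]]] := comp_series HL2 HY Ha FL.
pose u t := a s`_(t %% D) * w (t %/ D)%N.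
have Hu : forall j i, (i < D)%N -> u (j * D + i)%N = a s`_i * w j.
  move=> j i iD; rewrite /u modnMDl modn_small // divnMDl // divn_small // addn0.
  done.
have HMS : forall j, (j <= k)%N -> forall y, M j y -> spn (a \o g) u (j * D) y.
  elim=> [|j IH] jk y.
    by move/M0 => ->; apply: spn0.
  have jk' : (j < k)%N by [].
  have [Ha1 Hb1] := Hj j jk'.
  move/Ha1 => [x [r [Mx ->]]].
  have [cs Hcs] := Hs r.
  set m := r - _ in Hcs.
  have Er : r = m + \sum_(i < D) g cs`_i * s`_i by rewrite subrK.
  have -> : x + a r * w j = (x + a m * w j) + \sum_(i < D) (a \o g) cs`_i * u (j * D + i)%N.
    rewrite Er rmorphD mulrDl addrA; congr (_ + _).
    rewrite rmorph_sum mulr_suml; apply: eq_bigr => i _.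
    by rewrite Hu // rmorphM /= mulrA.
  rewrite mulSn addnC; apply: spn_block.
  apply: spnD; apply: IH; try exact: ltnW; first exact: Mx.
  exact: Hb1.
apply: (@core _ _ (a \o g) u (k * D) HL1).
  by move=> y; apply: HMS (leqnn k) y (Mfull y).
move=> t m tK mm.
have jk : (t %/ D < k)%N by rewrite ltn_divLR.
have Et : t = (t %/ D * D + t %% D)%N by rewrite -divn_eq.
have -> : (a \o g) m * u t = a (g m * s`_(t %% D)%N) * w (t %/ D)%N.
  by rewrite /u rmorphM /= mulrA.
apply: (@spn_le _ _ _ _ _ _ _ (div.leq_divM t D)).
apply: HMS; first exact: ltnW.
by apply: (Hj _ jk).2; apply: max_ideal_mulr; apply: Hg.
Qed.

Definition transport (L1 L2 : comUnitRingType) (g : {rmorphism L1 -> L2})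
  (HL1 : local_ring L1) (HL2 : local_ring L2) (Hg : local_hom g)
  (Hres : finite_residue_ext g) (X : pdobj L2) : pdobj L1 :=
  @PDObj L1 (@pd_car _ X) (@pd_alg _ X \o g) (@pd_gam _ X) (@pd_local _ X)
    (fun x hx => @pd_alg_local _ X _ (Hg x hx))
    (transfer_length HL1 HL2 (@pd_local _ X) Hg (@pd_alg_local _ X) Hres (@pd_length _ X))
    (@pd_struct _ X).

Theorem mainTheorem8 (L L1 L2 : comUnitRingType)
  (f : {rmorphism L -> L1}) (g : {rmorphism L1 -> L2}) :
  local_ring L -> local_ring L1 -> local_ring L2 ->
  local_hom f -> local_hom g ->
  finite_residue_ext g ->
  slightly_ramified (g \o f) ->
  slightly_ramified f.
Proof.
move=> HL HL1 HL2 Hf Hg Hres Hsr x y E; apply: Hsr.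
rewrite /to_gamma_hat; apply: subset_eq_compat.
apply: functional_extensionality_dep => X.
exact: (f_equal (fun z => proj1_sig z (transport HL1 HL2 Hg Hres X)) E).
Qed.
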